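(* Let $\Gamma$ be a group of compactly supported homeomorphisms of $\mathbb{R}$ that contains $F'$, with $F$ and $F'$ as in the context. Then the commutator subgroup $\Gamma'$ is simple.
   Context: $F$ denotes the group of homeomorphisms of $\mathbb{R}$ generated by the following two maps: - $a(t)=t+1$; - $b$, where $b(t)=t$ for $t\le 0$, $b(t)=t/(1-t)$ for $0\le t\le 1/2$, $b(t)=(3t-1)/t$ for $1/2\le t\le 1$, and $b(t)=t+1$ for $t\ge 1$. This $F$ is a copy of Thompson's group $F$ acting on the real line, and $F'$ is its commutator subgroup. *)

(* Defs.v *)
From Stdlib Require Import Reals.
Open Scope R_scope.

Definition homeo (f : R -> R) : Prop :=
  continuity f /\
  exists g : R -> R, continuity g /\ (forall x, g (f x) = x) /\ (forall x, f (g x) = x).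

(* Compact support: the closure of {t | f t <> t} is compact, i.e. bounded. *)
Definition compactly_supported (f : R -> R) : Prop :=
  exists M : R, forall t, M < Rabs t -> f t = t.

Definition is_subgroup (H : (R -> R) -> Prop) : Prop :=
  (forall f, H f -> homeo f) /\
  H (fun x => x) /\
  (forall f g, H f -> H g -> H (fun x => f (g x))) /\
  (forall f, H f -> exists g, H g /\ (forall x, g (f x) = x) /\ (forall x, f (g x) = x)).

Definition gen (S : (R -> R) -> Prop) (f : R -> R) : Prop :=
  forall H, is_subgroup H -> (forall s, S s -> H s) -> H f.

Definition commutators (H : (R -> R) -> Prop) (f : R -> R) : Prop :=
  exists g gi h hi : R -> R,
    H g /\ H h /\
    (forall x, gi (g x) = x) /\ (forall x, g (gi x) = x) /\
    (forall x, hi (h x) = x) /\ (forall x, h (hi x) = x) /\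
    f = (fun x => gi (hi (g (h x)))).

Definition comm_subgroup (H : (R -> R) -> Prop) : (R -> R) -> Prop :=
  gen (commutators H).

Definition normal_in (N G : (R -> R) -> Prop) : Prop :=
  is_subgroup N /\ (forall f, N f -> G f) /\
  (forall g gi n, G g -> (forall x, gi (g x) = x) -> (forall x, g (gi x) = x) ->
     N n -> N (fun x => gi (n (g x)))).

Definition simple_group (G : (R -> R) -> Prop) : Prop :=
  (exists f, G f /\ f <> (fun x => x)) /\
  (forall N, normal_in N G ->
     (forall f, N f -> f = (fun x => x)) \/ (forall f, G f -> N f)).

Definition a_gen (t : R) : R := t + 1.

Definition b_gen (t : R) : R :=
  if Rle_dec t 0 then t
  else if Rle_dec t (1/2) then t / (1 - t)
  else if Rle_dec t 1 then (3 * t - 1) / t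
  else t + 1.

Definition F_thompson : (R -> R) -> Prop :=
  gen (fun f => f = a_gen \/ f = b_gen).

Definition F_comm : (R -> R) -> Prop := comm_subgroup F_thompson.

(* Main.v *)
Require Import Defs.
From Stdlib Require Import Reals Lra Lia Psatz Classical FunctionalExtensionality.
Open Scope R_scope.

Lemma inv_unique (f g g' : R -> R) :
  (forall x, g (f x) = x) -> (forall x, f (g' x) = x) -> g = g'.
Proof. intros H1 H2; apply functional_extensionality; intro x.
  rewrite <- (H2 x) at 1. rewrite H1. reflexivity. Qed.

Lemma gen_in S f : S f -> gen S f.
Proof. intros Hs H HH Hsub; auto. Qed.

Lemma gen_id S : gen S (fun x => x).
Proof. intros H [_ [Hid _]] _; exact Hid. Qed.

Lemma gen_comp S f g : gen S f -> gen S g -> gen S (fun x => f (g x)).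
Proof. intros Hf Hg H HH Hs. pose proof HH as [_ [_ [Hc _]]]. apply Hc; [apply Hf|apply Hg]; auto. Qed.

Lemma gen_le S H f : is_subgroup H -> (forall s, S s -> H s) -> gen S f -> H f.
Proof. intros HH Hs Hf; apply Hf; auto. Qed.

Lemma gen_inv_explicit S f fi : gen S f -> (forall x, fi (f x) = x) -> (forall x, f (fi x) = x) -> gen S fi.
Proof. intros Hf H1 H2 H HH Hs. pose proof HH as [_ [_ [_ Hi]]].
  destruct (Hi f (Hf H HH Hs)) as [g [Hg [Hg1 Hg2]]].
  assert (g = fi) by (apply (inv_unique f); auto). subst; auto. Qed.

Lemma gen_subgroup S H0 : is_subgroup H0 -> (forall s, S s -> H0 s) -> is_subgroup (gen S).
Proof. intros HH0 Hs. split; [|split; [|split]].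
  - intros f Hf. apply HH0. apply (gen_le S H0); auto.
  - apply gen_id.
  - apply gen_comp.
  - intros f Hf. assert (Hh : homeo f) by (apply HH0; apply (gen_le S H0); auto).
    destruct Hh as [_ [g [_ [H1 H2]]]]. exists g. split; auto.
    apply (gen_inv_explicit S f); auto.
Qed.

Lemma sub_inv H f : is_subgroup H -> H f -> forall fi, (forall x, fi (f x) = x) -> (forall x, f (fi x) = x) -> H fi.
Proof. intros [_ [_ [_ Hi]]] Hf fi H1 H2. destruct (Hi f Hf) as [g [Hg [Hg1 Hg2]]].
  assert (g = fi) by (apply (inv_unique f); auto). subst; auto. Qed.

Lemma sub_homeo_inv H f : is_subgroup H -> H f -> exists fi, H fi /\ (forall x, fi (f x) = x) /\ (forall x, f (fi x) = x).
Proof. intros [_ [_ [_ Hi]]] Hf; auto. Qed.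

Lemma sub_comp H f g : is_subgroup H -> H f -> H g -> H (fun x => f (g x)).
Proof. intros [_ [_ [Hc _]]]; auto. Qed.

Lemma sub_id H : is_subgroup H -> H (fun x => x).
Proof. intros [_ [Hi _]]; auto. Qed.

Lemma comm_in_sub H f : is_subgroup H -> commutators H f -> H f.
Proof. intros HH [g [gi [h [hi [Hg [Hh [H1 [H2 [H3 [H4 ->]]]]]]]]]].
  assert (H gi) by (apply (sub_inv H g); auto).
  assert (H hi) by (apply (sub_inv H h); auto).
  apply sub_comp; auto. apply (sub_comp H hi (fun x => g (h x))); auto. apply sub_comp; auto. Qed.

Lemma b_neg t : t <= 0 -> b_gen t = t.
Proof. intros; unfold b_gen; destruct (Rle_dec t 0); lra. Qed.
Lemma b_half t : 0 <= t <= 1/2 -> b_gen t = t / (1 - t).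
Proof. intros; unfold b_gen; destruct (Rle_dec t 0).
  - assert (t = 0) by lra; subst; field.
  - destruct (Rle_dec t (1/2)); [reflexivity| lra]. Qed.
Lemma b_sec t : 1/2 <= t <= 1 -> b_gen t = (3 * t - 1) / t.
Proof. intros; unfold b_gen; destruct (Rle_dec t 0); [lra|].
  destruct (Rle_dec t (1/2)).
  - assert (t = 1/2) by lra; subst; field.
  - destruct (Rle_dec t 1); [reflexivity|lra]. Qed.
Lemma b_big t : 1 <= t -> b_gen t = t + 1.
Proof. intros; unfold b_gen; destruct (Rle_dec t 0); [lra|].
  destruct (Rle_dec t (1/2)); [lra|].
  destruct (Rle_dec t 1).
  - assert (t = 1) by lra; subst; field.
  - reflexivity. Qed.

Definition bi0 (t : R) : R :=
  if Rle_dec t 0 then t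
  else if Rle_dec t 1 then t / (1 + t)
  else if Rle_dec t 2 then 1 / (3 - t)
  else t - 1.

Lemma bi_neg t : t <= 0 -> bi0 t = t.
Proof. intros; unfold bi0; destruct (Rle_dec t 0); lra. Qed.
Lemma bi_1 t : 0 <= t <= 1 -> bi0 t = t / (1 + t).
Proof. intros; unfold bi0; destruct (Rle_dec t 0).
  - assert (t = 0) by lra; subst; field.
  - destruct (Rle_dec t 1); [reflexivity| lra]. Qed.
Lemma bi_2 t : 1 <= t <= 2 -> bi0 t = 1 / (3 - t).
Proof. intros; unfold bi0; destruct (Rle_dec t 0); [lra|].
  destruct (Rle_dec t 1).
  - assert (t = 1) by lra; subst; field.
  - destruct (Rle_dec t 2); [reflexivity|lra]. Qed.
Lemma bi_big t : 2 <= t -> bi0 t = t - 1.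
Proof. intros; unfold bi0; destruct (Rle_dec t 0); [lra|].
  destruct (Rle_dec t 1); [lra|].
  destruct (Rle_dec t 2).
  - assert (t = 2) by lra; subst; field.
  - reflexivity. Qed.

Lemma div_le a b c : 0 < c -> a <= b * c -> a / c <= b.
Proof. intros. replace b with ((b*c)/c) by (field; lra). unfold Rdiv.
  apply Rmult_le_compat_r; [left; apply Rinv_0_lt_compat; lra | lra]. Qed.
Lemma le_div a b c : 0 < c -> b * c <= a -> b <= a / c.
Proof. intros. replace b with ((b*c)/c) by (field; lra). unfold Rdiv.
  apply Rmult_le_compat_r; [left; apply Rinv_0_lt_compat; lra | lra]. Qed.

Lemma frac1_range t : 0 <= t <= 1 -> 0 <= t / (1 + t) <= 1/2.
Proof. intros. split; [apply le_div|apply div_le]; lra. Qed.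

Lemma frac2_range t : 1 <= t <= 2 -> 1/2 <= 1 / (3 - t) <= 1.
Proof. intros. split; [apply le_div|apply div_le]; lra. Qed.

Lemma b_bi t : b_gen (bi0 t) = t.
Proof. destruct (Rle_dec t 0).
  - rewrite bi_neg, b_neg; lra.
  - destruct (Rle_dec t 1).
    + rewrite bi_1 by lra. pose proof (frac1_range t). rewrite b_half by lra. field. lra.
    + destruct (Rle_dec t 2).
      * rewrite bi_2 by lra. pose proof (frac2_range t). rewrite b_sec by lra. field. lra.
      * rewrite bi_big by lra. rewrite b_big by lra. ring. Qed.

Lemma bi_b t : bi0 (b_gen t) = t.
Proof. destruct (Rle_dec t 0).
  - rewrite b_neg, bi_neg; lra.
  - destruct (Rle_dec t (1/2)).
    + rewrite b_half by lra.
      assert (0 <= t / (1 - t) <= 1) by (split; [apply le_div|apply div_le]; lra).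
      rewrite bi_1 by lra. field. split; lra.
    + destruct (Rle_dec t 1).
      * rewrite b_sec by lra.
        assert (1 <= (3 * t - 1) / t <= 2) by (split; [apply le_div|apply div_le]; lra).
        rewrite bi_2 by lra. replace (3 - (3 * t - 1) / t) with (1 / t) by (field; lra). field; lra.
      * rewrite b_big by lra. rewrite bi_big by lra. ring. Qed.

Lemma b_bounds t : t <= b_gen t <= t + 1.
Proof. destruct (Rle_dec t 0).
  - rewrite b_neg; lra.
  - destruct (Rle_dec t (1/2)).
    + rewrite b_half by lra. split; [apply le_div|apply div_le]; nra.
    + destruct (Rle_dec t 1).
      * rewrite b_sec by lra. split; [apply le_div|apply div_le]; nra.
      * rewrite b_big by lra. lra. Qed.

Definition ML (y z : R) := 0 <= bi0 z - bi0 y <= z - y.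

Lemma ML_trans y c z : ML y c -> ML c z -> ML y z.
Proof. unfold ML; intros; lra. Qed.

Lemma ML_p0 y z : y <= z <= 0 -> ML y z.
Proof. intros; unfold ML; rewrite !bi_neg; lra. Qed.
Lemma ML_p1 y z : 0 <= y <= z /\ z <= 1 -> ML y z.
Proof. intros [[H1 H2] H3]; unfold ML; rewrite !bi_1 by lra.
  replace (z / (1 + z) - y / (1 + y)) with ((z - y) / ((1 + y) * (1 + z))) by (field; lra).
  assert (1 <= (1 + y) * (1 + z)) by nra.
  split; [apply le_div|apply div_le]; nra. Qed.
Lemma ML_p2 y z : 1 <= y <= z /\ z <= 2 -> ML y z.
Proof. intros [[H1 H2] H3]; unfold ML; rewrite !bi_2 by lra.
  replace (1 / (3 - z) - 1 / (3 - y)) with ((z - y) / ((3 - y) * (3 - z))) by (field; lra).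
  assert (1 <= (3 - y) * (3 - z)) by nra.
  split; [apply le_div|apply div_le]; nra. Qed.
Lemma ML_p3 y z : 2 <= y <= z -> ML y z.
Proof. intros; unfold ML; rewrite !bi_big; lra. Qed.

Lemma ML_all y z : y <= z -> ML y z.
Proof. intros H.
  assert (Ha : forall y z, y <= z -> z <= 0 -> ML y z) by (intros; apply ML_p0; lra).
  assert (Hb : forall y z, y <= z -> z <= 1 -> ML y z).
  { intros y0 z0 H1 H2. destruct (Rle_dec z0 0); [apply Ha; lra|].
    destruct (Rle_dec y0 0).
    - apply (ML_trans y0 0 z0); [apply Ha; lra| apply ML_p1; lra].
    - apply ML_p1; lra. }
  assert (Hc : forall y z, y <= z -> z <= 2 -> ML y z).
  { intros y0 z0 H1 H2. destruct (Rle_dec z0 1); [apply Hb; lra|].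
    destruct (Rle_dec y0 1).
    - apply (ML_trans y0 1 z0); [apply Hb; lra| apply ML_p2; lra].
    - apply ML_p2; lra. }
  destruct (Rle_dec z 2); [apply Hc; lra|].
  destruct (Rle_dec y 2).
  - apply (ML_trans y 2 z); [apply Hc; lra| apply ML_p3; lra].
  - apply ML_p3; lra. Qed.

Lemma bi_lip y z : Rabs (bi0 y - bi0 z) <= Rabs (y - z).
Proof. destruct (Rle_dec y z).
  - pose proof (ML_all y z r) as [H1 H2]. rewrite !Rabs_left1; lra.
  - assert (z <= y) by lra. pose proof (ML_all z y H) as [H1 H2]. rewrite !Rabs_right; lra. Qed.

Lemma div_lt a b c : 0 < c -> a < b * c -> a / c < b.
Proof. intros. replace b with ((b*c)/c) by (field; lra). unfold Rdiv.
  apply Rmult_lt_compat_r; [apply Rinv_0_lt_compat; lra | lra]. Qed.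

Definition ai (t : R) : R := t - 1.

Fixpoint it (n : nat) (f : R -> R) (x : R) : R :=
  match n with O => x | S n => f (it n f x) end.

Lemma it_succ_r n f x : it (S n) f x = it n f (f x).
Proof. revert x; induction n; intros; simpl; auto. simpl in IHn. rewrite IHn. reflexivity. Qed.

Lemma it_inv n f g x : (forall y, f (g y) = y) -> it n f (it n g x) = x.
Proof. intros H. induction n; [simpl; auto|]. rewrite it_succ_r. change (it (S n) g x) with (g (it n g x)). rewrite H. exact IHn. Qed.

Lemma F_a : F_thompson a_gen. Proof. apply gen_in; auto. Qed.
Lemma F_b : F_thompson b_gen. Proof. apply gen_in; auto. Qed.
Lemma F_ai : F_thompson ai.
Proof. apply (gen_inv_explicit _ a_gen); [apply F_a | intros; unfold ai, a_gen; ring | intros; unfold ai, a_gen; ring]. Qed.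
Lemma F_bi : F_thompson bi0.
Proof. apply (gen_inv_explicit _ b_gen); [apply F_b | apply bi_b | apply b_bi]. Qed.
Lemma F_comp f g : F_thompson f -> F_thompson g -> F_thompson (fun x => f (g x)).
Proof. apply gen_comp. Qed.
Lemma F_it n f : F_thompson f -> F_thompson (it n f).
Proof. intros Hf. induction n; simpl.
  - apply gen_id.
  - apply (F_comp f (it n f)); auto. Qed.

Lemma Fc_in x : commutators F_thompson x -> F_comm x.
Proof. apply gen_in. Qed.

Lemma Fc_Gamma (Gamma : (R -> R) -> Prop) (HG : is_subgroup Gamma)
  (HF : forall f, F_comm f -> Gamma f) : is_subgroup F_comm.
Proof. apply (gen_subgroup _ Gamma); auto. intros; apply HF, gen_in; auto. Qed.

Lemma Fc_conj (Gamma : (R -> R) -> Prop) (HG : is_subgroup Gamma)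
  (HF : forall f, F_comm f -> Gamma f) g gi :
  F_thompson g -> F_thompson gi -> (forall x, gi (g x) = x) -> (forall x, g (gi x) = x) ->
  forall p, F_comm p -> F_comm (fun x => gi (p (g x))).
Proof. intros Fg Fgi H1 H2.
  pose proof (Fc_Gamma Gamma HG HF) as HFc.
  set (K := fun f => Gamma f /\ F_comm (fun x => gi (f (g x)))).
  assert (HK : is_subgroup K).
  { split; [|split; [|split]].
    - intros f [Hf _]. apply HG; auto.
    - split; [apply sub_id; auto|]. replace (fun x => gi (g x)) with (fun x : R => x)
        by (apply functional_extensionality; intros; rewrite H1; auto). apply gen_id.
    - intros f1 f2 [Hf1 Hc1] [Hf2 Hc2]. split; [apply sub_comp; auto|].
      pose proof (gen_comp _ _ _ Hc1 Hc2) as Hc. cbv beta in Hc |- *.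
      replace (fun x => gi (f1 (f2 (g x)))) with (fun x => gi (f1 (g (gi (f2 (g x))))))
        by (apply functional_extensionality; intros; rewrite H2; auto).
      exact Hc.
    - intros f [Hf Hc]. destruct (sub_homeo_inv Gamma f HG Hf) as [fi [Hfi [E1 E2]]].
      exists fi. split; [|split; auto]. split; auto.
      apply (sub_inv F_comm (fun x => gi (f (g x)))); auto.
      + intros x. rewrite H2, E1, H1. auto.
      + intros x. rewrite H2, E2, H1. auto. }
  intros p Hp. refine (proj2 (gen_le (commutators F_thompson) K p HK _ Hp)).  
  intros s [x [xi [y [yi [Hx [Hy [E1 [E2 [E3 [E4 ->]]]]]]]]]].
  split.
  - apply HF, gen_in. exists x, xi, y, yi; repeat split; auto.
  - apply gen_in. exists (fun t => gi (x (g t))), (fun t => gi (xi (g t))),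
      (fun t => gi (y (g t))), (fun t => gi (yi (g t))).
    repeat split.
    + apply F_comp; auto. apply F_comp; auto.
    + apply F_comp; auto. apply F_comp; auto.
    + intros; rewrite H2, E1, H1; auto.
    + intros; rewrite H2, E2, H1; auto.
    + intros; rewrite H2, E3, H1; auto.
    + intros; rewrite H2, E4, H1; auto.
    + apply functional_extensionality; intros; rewrite !H2; auto.
Qed.

Lemma Fhat q qi r ri (M : R) :
  F_thompson q -> F_thompson qi -> F_thompson r -> F_thompson ri ->
  (forall x, qi (q x) = x) -> (forall x, q (qi x) = x) ->
  (forall x, ri (r x) = x) -> (forall x, r (ri x) = x) ->
  (forall t, -M <= t <= M -> q (r t) = r t) ->
  exists p, F_comm p /\ forall t, -M <= t <= M -> p t = q t.
Proof. intros Fq Fqi Fr Fri E1 E2 E3 E4 Hfix.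
  exists (fun x => q (ri (qi (r x)))). split.
  - apply gen_in. exists qi, q, r, ri. repeat split; auto.
  - intros t Ht. rewrite <- (Hfix t Ht) at 1. rewrite E1, E3. auto.
Qed.

Lemma nat_big (x : R) : exists n : nat, x <= INR n.
Proof. destruct (INR_archimed 1 x) as [n Hn]; [lra|]. exists n. lra. Qed.

Lemma nat_small (e : R) : 0 < e -> exists k : nat, 1 / (INR k + 1) < e.
Proof. intros He. destruct (nat_big (1 / e)) as [k Hk].
  pose proof (pos_INR k). exists k.
  apply div_lt; [lra|].
  assert (1 / e * e = 1) by (field; lra). nra. Qed.

Lemma it_a j t : it j a_gen t = t + INR j.
Proof. induction j; simpl it; [simpl; lra|]. rewrite IHj, S_INR. unfold a_gen. lra. Qed.
Lemma it_ai j t : it j ai t = t - INR j.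
Proof. induction j; simpl it; [simpl; lra|]. rewrite IHj, S_INR. unfold ai. lra. Qed.

Lemma it_fix n f t : f t = t -> it n f t = t.
Proof. intros H; induction n; simpl; auto. rewrite IHn; auto. Qed.

Lemma bi_nonneg t : 0 <= t -> 0 <= bi0 t.
Proof. intros. pose proof (ML_all 0 t H) as [H1 _]. rewrite (bi_neg 0) in H1 by lra. lra. Qed.

Lemma bi_step t : 0 <= t -> bi0 t <= 1 \/ bi0 t = t - 1.
Proof. intros. destruct (Rle_dec t 2).
  - left. pose proof (ML_all t 2 r) as [H1 _]. rewrite (bi_2 2) in H1 by lra. lra.
  - right. apply bi_big; lra. Qed.

Lemma bi_it_bound n t : 0 <= t <= INR n + 1 -> 0 <= it n bi0 t <= 1.
Proof. revert t; induction n; intros t Ht.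
  - simpl in *; lra.
  - rewrite it_succ_r. apply IHn. rewrite S_INR in Ht.
    pose proof (pos_INR n). pose proof (bi_nonneg t ltac:(lra)). destruct (bi_step t ltac:(lra)); lra. Qed.

Lemma recip_step (s c : R) : 0 < c -> 0 <= s <= 1 / c -> s / (1 + s) <= 1 / (c + 1).
Proof. intros Hc [H1 H2].
  assert (s * c <= 1). { assert (1 / c * c = 1) by (field; lra). assert (s * c <= 1 / c * c) by (apply Rmult_le_compat_r; lra). lra. }
  apply div_le; [lra|]. replace (1 / (c + 1) * (1 + s)) with ((1 + s) / (c + 1)) by (field; lra).
  apply le_div; lra. Qed.

Lemma bi_it_small k t : 0 <= t <= 1 -> 0 <= it k bi0 t <= 1 / (INR k + 1).
Proof. intros Ht; induction k.
  - simpl. lra.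
  - simpl it. rewrite S_INR. pose proof (pos_INR k).
    assert (0 <= it k bi0 t <= 1).
    { split; [lra|]. destruct IHk as [_ H2]. eapply Rle_trans; [exact H2|]. apply div_le; lra. }
    rewrite bi_1 by lra. split.
    + apply le_div; lra.
    + apply recip_step; lra. Qed.

Definition e0 (t : R) : R := ai (bi0 (a_gen (a_gen t))).
Definition e0i (t : R) : R := ai (ai (b_gen (a_gen t))).

Lemma e0_inv1 t : e0i (e0 t) = t.
Proof. unfold e0, e0i, ai, a_gen. replace (bi0 (t + 1 + 1) - 1 + 1) with (bi0 (t + 1 + 1)) by ring.
  rewrite b_bi. ring. Qed.
Lemma e0_inv2 t : e0 (e0i t) = t.
Proof. unfold e0, e0i, ai, a_gen. replace (b_gen (t + 1) - 1 - 1 + 1 + 1) with (b_gen (t + 1)) by ring.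
  rewrite bi_b. ring. Qed.
Lemma F_e0 : F_thompson e0.
Proof. unfold e0. apply (F_comp ai); [apply F_ai|]. apply (F_comp bi0); [apply F_bi|].
  apply (F_comp a_gen); [apply F_a|apply F_a]. Qed.
Lemma F_e0i : F_thompson e0i.
Proof. unfold e0i. apply (F_comp ai); [apply F_ai|]. apply (F_comp ai); [apply F_ai|].
  apply (F_comp b_gen); [apply F_b|apply F_a]. Qed.

Lemma e0_pos t : 0 <= t -> e0 t = t.
Proof. intros; unfold e0, ai, a_gen. rewrite bi_big by lra. ring. Qed.

Lemma e0_step t : t <= 0 -> e0 t <= 0 /\ (-1 <= e0 t \/ e0 t = t + 1).
Proof. intros. unfold e0, ai, a_gen. destruct (Rle_dec t (-2)).
  - rewrite bi_neg by lra. lra.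
  - pose proof (ML_all (t + 1 + 1) 2 ltac:(lra)) as [H1 H2]. rewrite (bi_2 2) in H1 by lra.
    pose proof (bi_nonneg (t + 1 + 1) ltac:(lra)). lra. Qed.

Lemma e0_near t : -1 <= t <= 0 -> e0 t = t / (1 - t).
Proof. intros; unfold e0, ai, a_gen. rewrite bi_2 by lra. field. lra. Qed.

Lemma e0_it_bound n t : -(INR n + 1) <= t <= 0 -> -1 <= it n e0 t <= 0.
Proof. revert t; induction n; intros t Ht.
  - simpl in *; lra.
  - rewrite it_succ_r. apply IHn. rewrite S_INR in Ht.
    pose proof (pos_INR n). destruct (e0_step t ltac:(lra)) as [H1 [H2|H2]]; lra. Qed.

Lemma e0_it_small k t : -1 <= t <= 0 -> - (1 / (INR k + 1)) <= it k e0 t <= 0.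
Proof. intros Ht; induction k.
  - simpl. lra.
  - simpl it. rewrite S_INR. pose proof (pos_INR k). set (s := it k e0 t) in *.
    assert (-1 <= s <= 0).
    { split; [|lra]. destruct IHk as [H2 _]. eapply Rle_trans; [|exact H2].
      assert (1 / (INR k + 1) <= 1) by (apply div_le; lra). lra. }
    rewrite e0_near by lra.
    assert (Hq : 0 <= - s <= 1 / (INR k + 1)) by lra.
    assert (Hr := recip_step (- s) (INR k + 1) ltac:(lra) Hq).
    assert (0 <= - s / (1 + - s)) by (apply le_div; lra).
    replace (s / (1 - s)) with (- (- s / (1 + - s))) by (field; lra). lra. Qed.

Definition Dset (x : R) : Prop := forall M eps, 0 < eps ->
  exists p, F_comm p /\ forall t, -M <= t <= M -> Rabs (p t - x) < eps.

Lemma abs_lt x e : -e < x < e -> Rabs x < e.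
Proof. intros [H1 H2]. apply Rabs_def1; lra. Qed.
Lemma abs_lt_inv x e : Rabs x < e -> -e < x < e.
Proof. intros H. apply Rabs_def2 in H. lra. Qed.
Lemma abs_le_inv x e : Rabs x <= e -> -e <= x <= e.
Proof. intros H. split; [|eapply Rle_trans; [apply Rle_abs|exact H]].
  pose proof (Rle_abs (-x)). rewrite Rabs_Ropp in H0. lra. Qed.

Lemma D0 (Gamma : (R -> R) -> Prop) (HG : is_subgroup Gamma)
  (HF : forall f, F_comm f -> Gamma f) : Dset 0.
Proof. intros M eps He.
  destruct (nat_big (Rabs M + 1)) as [N HN].
  destruct (nat_small eps He) as [k Hk].
  pose proof (pos_INR k) as Hk0. pose proof (Rle_abs M). pose proof (Rle_abs (-M)) as HM2. rewrite Rabs_Ropp in HM2.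
  destruct (Fhat (fun t => it k bi0 (it N bi0 t)) (fun t => it N b_gen (it k b_gen t))
      (it N ai) (it N a_gen) (Rabs M + 1)) as [P1 [HP1 EP1]].
  { apply F_comp; apply F_it; apply F_bi. }
  { apply F_comp; apply F_it; apply F_b. }
  { apply F_it, F_ai. } { apply F_it, F_a. }
  { intros; rewrite !it_inv; auto; apply b_bi. }
  { intros; rewrite !it_inv; auto; apply bi_b. }
  { intros; apply it_inv; intros; unfold a_gen, ai; ring. }
  { intros; apply it_inv; intros; unfold a_gen, ai; ring. }
  { intros t Ht. rewrite it_ai. rewrite (it_fix N bi0), (it_fix k bi0); auto; apply bi_neg; lra. }
  destruct (Fhat (fun t => it k e0 (it N e0 t)) (fun t => it N e0i (it k e0i t))
      (it N a_gen) (it N ai) (Rabs M + 1)) as [P2 [HP2 EP2]].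
  { apply F_comp; apply F_it; apply F_e0. }
  { apply F_comp; apply F_it; apply F_e0i. }
  { apply F_it, F_a. } { apply F_it, F_ai. }
  { intros; rewrite !it_inv; auto; apply e0_inv1. }
  { intros; rewrite !it_inv; auto; apply e0_inv2. }
  { intros; apply it_inv; intros; unfold a_gen, ai; ring. }
  { intros; apply it_inv; intros; unfold a_gen, ai; ring. }
  { intros t Ht. rewrite it_a. rewrite (it_fix N e0), (it_fix k e0); auto; apply e0_pos; lra. }
  exists (fun t => P1 (P2 t)). split; [apply gen_comp; auto|].
  intros t Ht. rewrite EP2 by lra. rewrite Rminus_0_r.
  destruct (Rle_dec t 0).
  - assert (Hq : -1 <= it N e0 t <= 0); [apply e0_it_bound; lra|].
    pose proof (e0_it_small k (it N e0 t) Hq).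
    assert (1 / (INR k + 1) <= 1) by (apply div_le; lra).
    rewrite EP1 by lra.
    rewrite (it_fix N bi0), (it_fix k bi0) by (apply bi_neg; lra).
    apply abs_lt; lra.
  - rewrite (it_fix N e0), (it_fix k e0) by (apply e0_pos; lra).
    rewrite EP1 by lra.
    assert (Hq : 0 <= it N bi0 t <= 1) by (apply bi_it_bound; lra).
    pose proof (bi_it_small k (it N bi0 t) Hq).
    apply abs_lt; lra.
Qed.

Lemma D_a (Gamma : (R -> R) -> Prop) (HG : is_subgroup Gamma)
  (HF : forall f, F_comm f -> Gamma f) x : Dset x -> Dset (x + 1).
Proof. intros Hx M eps He. destruct (Hx (M+1) eps He) as [p [Hp Hb]].
  exists (fun t => a_gen (p (ai t))). split.
  - apply (Fc_conj Gamma HG HF ai a_gen F_ai F_a); auto; intros; unfold a_gen, ai; ring.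
  - intros t Ht. specialize (Hb (ai t)). unfold ai, a_gen in *.
    replace (p (t - 1) + 1 - (x + 1)) with (p (t - 1) - x) by ring. apply Hb; lra. Qed.

Lemma D_ai (Gamma : (R -> R) -> Prop) (HG : is_subgroup Gamma)
  (HF : forall f, F_comm f -> Gamma f) x : Dset (x + 1) -> Dset x.
Proof. intros Hx M eps He. destruct (Hx (M+1) eps He) as [p [Hp Hb]].
  exists (fun t => ai (p (a_gen t))). split.
  - apply (Fc_conj Gamma HG HF a_gen ai F_a F_ai); auto; intros; unfold a_gen, ai; ring.
  - intros t Ht. specialize (Hb (a_gen t)). unfold ai, a_gen in *.
    replace (p (t + 1) - 1 - x) with (p (t + 1) - (x + 1)) by ring. apply Hb; lra. Qed.

Lemma D_b (Gamma : (R -> R) -> Prop) (HG : is_subgroup Gamma)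
  (HF : forall f, F_comm f -> Gamma f) x : Dset (b_gen x) -> Dset x.
Proof. intros Hx M eps He. destruct (Hx (M+1) eps He) as [p [Hp Hb]].
  exists (fun t => bi0 (p (b_gen t))). split.
  - apply (Fc_conj Gamma HG HF b_gen bi0 F_b F_bi); auto; [apply bi_b|apply b_bi].
  - intros t Ht. pose proof (b_bounds t). specialize (Hb (b_gen t) ltac:(lra)).
    pose proof (bi_lip (p (b_gen t)) (b_gen x)). rewrite bi_b in H0. lra. Qed.

Lemma D_close x : (forall eta, 0 < eta -> exists y, Dset y /\ Rabs (x - y) < eta) -> Dset x.
Proof. intros H M eps He. destruct (H (eps/2) ltac:(lra)) as [y [Hy Hxy]].
  destruct (Hy M (eps/2) ltac:(lra)) as [p [Hp Hb]]. exists p. split; auto.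
  intros t Ht. specialize (Hb t Ht). apply abs_lt_inv in Hb. apply abs_lt_inv in Hxy.
  apply abs_lt. lra. Qed.

Lemma len_step1 u v c : 0 < c -> 0 <= u <= v -> v <= 1 -> v - u <= 1 / c ->
  bi0 v - bi0 u <= 1 / (c + 1).
Proof. intros Hc H1 H2 H3. rewrite !bi_1 by lra.
  replace (v / (1 + v) - u / (1 + u)) with ((v - u) / ((1 + u) * (1 + v))) by (field; lra).
  assert (Hl : (v - u) * c <= 1).
  { assert (1 / c * c = 1) by (field; lra). assert ((v-u) * c <= 1 / c * c) by (apply Rmult_le_compat_r; lra). lra. }
  apply div_le; [nra|]. replace (1 / (c + 1) * ((1 + u) * (1 + v))) with ((1 + u) * (1 + v) / (c + 1)) by (field; lra).
  apply le_div; nra. Qed.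

Lemma len_step2 u v c : 0 < c -> 0 <= u <= v -> v <= 1 -> v - u <= 1 / c ->
  bi0 (v + 1) - bi0 (u + 1) <= 1 / (c + 1).
Proof. intros Hc H1 H2 H3. rewrite !bi_2 by lra.
  replace (1 / (3 - (v + 1)) - 1 / (3 - (u + 1))) with ((v - u) / ((2 - u) * (2 - v))) by (field; lra).
  assert (Hl : (v - u) * c <= 1).
  { assert (1 / c * c = 1) by (field; lra). assert ((v-u) * c <= 1 / c * c) by (apply Rmult_le_compat_r; lra). lra. }
  apply div_le; [nra|]. replace (1 / (c + 1) * ((2 - u) * (2 - v))) with ((2 - u) * (2 - v) / (c + 1)) by (field; lra).
  apply le_div; nra. Qed.

Lemma farey (Gamma : (R -> R) -> Prop) (HG : is_subgroup Gamma)
  (HF : forall f, F_comm f -> Gamma f) (k : nat) : forall x, 0 <= x <= 1 ->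
  exists u v, Dset u /\ Dset v /\ 0 <= u <= x /\ x <= v <= 1 /\ v - u <= 1 / (INR k + 1).
Proof. induction k; intros x Hx.
  - exists 0, 1. pose proof (D0 Gamma HG HF).
    split; auto. split. { replace 1 with (0 + 1) by ring. apply (D_a Gamma HG HF); auto. }
    simpl. replace (1 / (0 + 1)) with 1 by field. lra.
  - rewrite S_INR. pose proof (pos_INR k).
    destruct (Rle_dec x (1/2)).
    + assert (Hbx : b_gen x = x / (1 - x)) by (apply b_half; lra).
      assert (0 <= b_gen x <= 1) by (rewrite Hbx; split; [apply le_div|apply div_le]; lra).
      destruct (IHk (b_gen x) H0) as [u [v [Du [Dv [Hu [Hv Hl]]]]]].
      exists (bi0 u), (bi0 v). split; [|split].
      * apply (D_b Gamma HG HF). rewrite b_bi; auto.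
      * apply (D_b Gamma HG HF). rewrite b_bi; auto.
      * pose proof (ML_all u (b_gen x) ltac:(lra)) as [A1 _].
        pose proof (ML_all (b_gen x) v ltac:(lra)) as [A2 _].
        pose proof (ML_all v 1 ltac:(lra)) as [A3 _].
        pose proof (bi_nonneg u ltac:(lra)).
        rewrite bi_b in A1, A2. rewrite (bi_1 1) in A3 by lra.
        assert (1 / (1 + 1) <= 1) by (apply div_le; lra).
        pose proof (len_step1 u v (INR k + 1) ltac:(lra) ltac:(lra) ltac:(lra) Hl). lra.
    + assert (Hbx : b_gen x = (3 * x - 1) / x) by (apply b_sec; lra).
      assert (1 <= b_gen x <= 2) by (rewrite Hbx; split; [apply le_div|apply div_le]; lra).
      destruct (IHk (b_gen x - 1) ltac:(lra)) as [u [v [Du [Dv [Hu [Hv Hl]]]]]].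
      exists (bi0 (u + 1)), (bi0 (v + 1)). split; [|split].
      * apply (D_b Gamma HG HF). rewrite b_bi; apply (D_a Gamma HG HF); auto.
      * apply (D_b Gamma HG HF). rewrite b_bi; apply (D_a Gamma HG HF); auto.
      * pose proof (ML_all (u + 1) (b_gen x) ltac:(lra)) as [A1 _].
        pose proof (ML_all (b_gen x) (v + 1) ltac:(lra)) as [A2 _].
        pose proof (ML_all (v + 1) 2 ltac:(lra)) as [A3 _].
        pose proof (bi_nonneg (u + 1) ltac:(lra)).
        rewrite bi_b in A1, A2. rewrite (bi_2 2) in A3 by lra.
        replace (1 / (3 - 2)) with 1 in A3 by field.
        pose proof (len_step2 u v (INR k + 1) ltac:(lra) ltac:(lra) ltac:(lra) Hl). lra.
Qed.

Lemma D01 (Gamma : (R -> R) -> Prop) (HG : is_subgroup Gamma)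
  (HF : forall f, F_comm f -> Gamma f) x : 0 <= x <= 1 -> Dset x.
Proof. intros Hx. apply D_close. intros eta He.
  destruct (nat_small eta He) as [k Hk].
  destruct (farey Gamma HG HF k x Hx) as [u [v [Du [Dv [Hu [Hv Hl]]]]]].
  exists u. split; auto. apply abs_lt; lra. Qed.

Lemma Dall (Gamma : (R -> R) -> Prop) (HG : is_subgroup Gamma)
  (HF : forall f, F_comm f -> Gamma f) x : Dset x.
Proof.
  assert (Hp : forall n : nat, forall x, 0 <= x <= INR n + 1 -> Dset x).
  { induction n; intros y Hy.
    - simpl in Hy. apply (D01 Gamma HG HF); lra.
    - rewrite S_INR in Hy. destruct (Rle_dec y 1).
      + apply (D01 Gamma HG HF); lra.
      + replace y with ((y - 1) + 1) by ring. apply (D_a Gamma HG HF). apply IHn; lra. }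
  assert (Hn : forall n : nat, forall x, -(INR n) <= x <= 0 -> Dset x).
  { induction n; intros y Hy.
    - simpl in Hy. apply (D01 Gamma HG HF); lra.
    - rewrite S_INR in Hy. apply (D_ai Gamma HG HF). destruct (Rle_dec (y + 1) 0).
      + apply IHn; lra.
      + apply (D01 Gamma HG HF); lra. }
  destruct (nat_big (Rabs x)) as [n Hn'].
  pose proof (Rle_abs x). pose proof (Rle_abs (-x)) as Hx2. rewrite Rabs_Ropp in Hx2.
  destruct (Rle_dec 0 x).
  - apply (Hp n); lra.
  - apply (Hn n); lra.
Qed.

Lemma Shrink (Gamma : (R -> R) -> Prop) (HG : is_subgroup Gamma)
  (HF : forall f, F_comm f -> Gamma f) M x eps : 0 < eps ->
  exists p, Gamma p /\ forall t, -M <= t <= M -> x - eps < p t < x + eps.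
Proof. intros He. destruct (Dall Gamma HG HF x M eps He) as [p [Hp Hb]].
  exists p. split; auto. intros t Ht. specialize (Hb t Ht). apply abs_lt_inv in Hb. lra. Qed.

Definition fixout (P : R -> Prop) (f : R -> R) := forall t, ~ P t -> f t = t.

Lemma fixout_inv P f fi : fixout P f -> (forall x, fi (f x) = x) -> fixout P fi.
Proof. intros H1 H2 t Ht. rewrite <- (H1 t Ht) at 1. apply H2. Qed.

Lemma fixout_maps P f fi : fixout P f -> (forall x, fi (f x) = x) -> forall t, P t -> P (f t).
Proof. intros H1 H2 t Ht. apply NNPP; intro Hn. pose proof (H1 _ Hn) as E.
  assert (f t = t) by (rewrite <- (H2 (f t)), E, H2; reflexivity). rewrite H in Hn. auto. Qed.

Definition normal_prop (N G : (R -> R) -> Prop) :=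
  forall g gi n, G g -> (forall x, gi (g x) = x) -> (forall x, g (gi x) = x) ->
     N n -> N (fun x => gi (n (g x))).

Lemma claim1 (G N : (R -> R) -> Prop) (HN : is_subgroup N) (Hnorm : normal_prop N G)
  (U : R -> Prop) n ni (Nn : N n) (Nni : N ni)
  (En1 : forall x, ni (n x) = x) (En2 : forall x, n (ni x) = x)
  (Hdisj : forall t, U t -> ~ U (n t))
  f fi g gi (Gf : G f) (Gg : G g)
  (Ef1 : forall x, fi (f x) = x) (Ef2 : forall x, f (fi x) = x)
  (Eg1 : forall x, gi (g x) = x) (Eg2 : forall x, g (gi x) = x)
  (Sf : fixout U f) (Sg : fixout U g) :
  N (fun x => f (gi (fi (g x)))).
Proof.
  assert (Nc : N (fun x => fi (ni (f (n x))))).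
  { apply (sub_comp N (fun x => fi (ni (f x))) n HN); auto. }
  assert (Nci : N (fun x => ni (fi (n (f x))))).
  { apply (sub_comp N ni (fun x => fi (n (f x))) HN); auto. }
  assert (Nconj : N (fun x => gi (fi (ni (f (n (g x))))))).
  { apply (Hnorm g gi (fun x => fi (ni (f (n x))))); auto. }
  pose proof (sub_comp N _ _ HN Nci Nconj) as Hfin. cbv beta in Hfin.
  replace (fun x => f (gi (fi (g x)))) with
    (fun x => ni (fi (n (f (gi (fi (ni (f (n (g x)))))))))); auto.
  apply functional_extensionality; intro t.
  set (V := fun t => U (n t)).
  set (k := fun x => ni (f (n x))).
  set (ki := fun x => ni (fi (n x))).
  assert (Sfi : fixout U fi) by (apply (fixout_inv U f); auto).
  assert (Sgi : fixout U gi) by (apply (fixout_inv U g); auto).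
  assert (Sk : fixout V k).
  { intros s Hs. unfold k. unfold V in Hs. rewrite Sf; auto. }
  assert (Ski : fixout V ki).
  { intros s Hs. unfold ki. unfold V in Hs. rewrite Sfi; auto. }
  assert (Ekk : forall x, ki (k x) = x).
  { intros x. unfold k, ki. rewrite En2, Ef1, En1. auto. }
  assert (Mk : forall s, V s -> V (k s)).
  { intros s Hs. unfold V, k in *. rewrite En2. apply (fixout_maps U f fi); auto. }
  assert (UV : forall s, U s -> ~ V s) by (intros s Hs; unfold V; apply Hdisj; auto).
  assert (VU : forall s, V s -> ~ U s) by (intros s Hs Hu; apply (UV s Hu Hs)).
  change (ki (f (gi (fi (k (g t))))) = f (gi (fi (g t)))).
  destruct (classic (U t)) as [Ht|Ht].
  - assert (H1 : U (g t)) by (apply (fixout_maps U g gi); auto).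
    rewrite (Sk (g t)) by (apply UV; auto).
    assert (H2 : U (fi (g t))) by (apply (fixout_maps U fi f); auto).
    assert (H3 : U (gi (fi (g t)))) by (apply (fixout_maps U gi g); auto).
    assert (H4 : U (f (gi (fi (g t))))) by (apply (fixout_maps U f fi); auto).
    rewrite Ski; auto.
  - destruct (classic (V t)) as [Hv|Hv].
    + rewrite (Sg t Ht). pose proof (Mk t Hv) as Hkv. pose proof (VU _ Hkv) as Hku.
      rewrite (Sfi _ Hku), (Sgi _ Hku), (Sf _ Hku), Ekk.
      rewrite (Sfi _ Ht), (Sgi _ Ht), (Sf _ Ht). auto.
    + rewrite (Sg t Ht), (Sk t Hv), (Sfi _ Ht), (Sgi _ Ht), (Sf _ Ht), (Ski t Hv). auto.
Qed.

Lemma conj_fixout (S U : R -> Prop) p pi w : (forall x, p (pi x) = x) ->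
  (forall t, S t -> U (p t)) -> fixout S w -> fixout U (fun x => p (w (pi x))).
Proof. intros E HS Hw t Ht. destruct (classic (S (pi t))) as [Hs|Hs].
  - exfalso. apply Ht. rewrite <- (E t). auto.
  - rewrite (Hw _ Hs). auto. Qed.

Lemma claim3_point (S A B : R -> Prop) g gi h hi Y Yi Z Zi
  (SA : forall t, S t -> ~ A t) (SB : forall t, S t -> ~ B t) (AB : forall t, A t -> ~ B t)
  (Eg1 : forall x, gi (g x) = x) (Eg2 : forall x, g (gi x) = x)
  (Eh1 : forall x, hi (h x) = x) (Eh2 : forall x, h (hi x) = x)
  (EY1 : forall x, Yi (Y x) = x) (EY2 : forall x, Y (Yi x) = x)
  (EZ1 : forall x, Zi (Z x) = x) (EZ2 : forall x, Z (Zi x) = x)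
  (Sg : fixout S g) (Sh : fixout S h) (SY : fixout A Y) (SZ : fixout B Z) :
  forall t, Yi (gi (Zi (hi (g (Y (h (Z t))))))) = gi (hi (g (h t))).
Proof.
  assert (Sgi : fixout S gi) by (apply (fixout_inv S g); auto).
  assert (Shi : fixout S hi) by (apply (fixout_inv S h); auto).
  assert (SYi : fixout A Yi) by (apply (fixout_inv A Y); auto).
  assert (SZi : fixout B Zi) by (apply (fixout_inv B Z); auto).
  assert (AS : forall t, A t -> ~ S t) by (intros t H1 H2; apply (SA t H2 H1)).
  assert (BS : forall t, B t -> ~ S t) by (intros t H1 H2; apply (SB t H2 H1)).
  assert (BA : forall t, B t -> ~ A t) by (intros t H1 H2; apply (AB t H2 H1)).
  intros t. destruct (classic (S t)) as [Hs|Hs].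
  - rewrite (SZ t) by auto.
    assert (H1 : S (h t)) by (apply (fixout_maps S h hi); auto).
    rewrite (SY (h t)) by auto.
    assert (H2 : S (g (h t))) by (apply (fixout_maps S g gi); auto).
    assert (H3 : S (hi (g (h t)))) by (apply (fixout_maps S hi h); auto).
    rewrite (SZi _) by auto.
    assert (H4 : S (gi (hi (g (h t))))) by (apply (fixout_maps S gi g); auto).
    rewrite (SYi _) by auto. auto.
  - destruct (classic (A t)) as [Ha|Ha].
    + rewrite (SZ t) by auto. rewrite (Sh t Hs).
      assert (H1 : A (Y t)) by (apply (fixout_maps A Y Yi); auto).
      rewrite (Sg _ (AS _ H1)), (Shi _ (AS _ H1)), (SZi _ (AB _ H1)), (Sgi _ (AS _ H1)), EY1.
      rewrite (Sg t Hs), (Shi t Hs), (Sgi t Hs). auto.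
    + destruct (classic (B t)) as [Hb|Hb].
      * assert (H1 : B (Z t)) by (apply (fixout_maps B Z Zi); auto).
        rewrite (Sh _ (BS _ H1)), (SY _ (BA _ H1)), (Sg _ (BS _ H1)), (Shi _ (BS _ H1)), EZ1.
        rewrite (Sgi t Hs), (SYi t Ha).
        rewrite (Sh t Hs), (Sg t Hs), (Shi t Hs), (Sgi t Hs). auto.
      * rewrite (SZ t Hb), (Sh t Hs), (SY t Ha), (Sg t Hs), (Shi t Hs), (SZi t Hb), (Sgi t Hs), (SYi t Ha).
        auto.
Qed.

Lemma cont_ball f x0 e : continuity f -> 0 < e ->
  exists d, 0 < d /\ forall t, Rabs (t - x0) < d -> Rabs (f t - f x0) < e.
Proof. intros Hc He. destruct (Hc x0 e He) as [d [Hd H]]. exists d. split; auto.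
  intros t Ht. destruct (Req_dec t x0) as [->|Hne].
  - rewrite Rminus_diag, Rabs_R0; auto.
  - apply H. split; [split; [exact I| auto]|]. exact Ht. Qed.

Lemma G'_sub (Gamma : (R -> R) -> Prop) (HG : is_subgroup Gamma) : is_subgroup (comm_subgroup Gamma).
Proof. apply (gen_subgroup _ Gamma HG). intros s Hs. apply comm_in_sub; auto. Qed.

Lemma G'_G (Gamma : (R -> R) -> Prop) (HG : is_subgroup Gamma) f : comm_subgroup Gamma f -> Gamma f.
Proof. intros Hf. apply (gen_le (commutators Gamma) Gamma f HG); auto. intros s Hs. apply comm_in_sub; auto. Qed.

Lemma fixout_cs (f : R -> R) K Kb : (forall t, K < Rabs t -> f t = t) -> Rabs K <= Kb ->
  fixout (fun t => -Kb <= t <= Kb) f.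
Proof. intros Hf HK t Ht. apply Hf. pose proof (Rle_abs K). pose proof (Rle_abs t).
  pose proof (Rle_abs (-t)) as H2. rewrite Rabs_Ropp in H2. lra. Qed.

Lemma Lhat (Gamma : (R -> R) -> Prop) (HG : is_subgroup Gamma)
  (Hcs : forall f, Gamma f -> compactly_supported f)
  (HF : forall f, F_comm f -> Gamma f) p M : Gamma p ->
  exists ph, comm_subgroup Gamma ph /\ forall t, -M <= t <= M -> ph t = p t.
Proof. intros Hp. destruct (Hcs p Hp) as [K HK].
  destruct (Shrink Gamma HG HF M (Rabs K + 2) 1 ltac:(lra)) as [r [Hr Hrb]].
  destruct (sub_homeo_inv Gamma p HG Hp) as [pi [Hpi [E1 E2]]].
  destruct (sub_homeo_inv Gamma r HG Hr) as [ri [Hri [E3 E4]]].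
  exists (fun x => p (ri (pi (r x)))). split.
  - apply gen_in. exists pi, p, r, ri. repeat split; auto.
  - intros t Ht. specialize (Hrb t Ht). pose proof (Rle_abs K).
    assert (Hfix : p (r t) = r t).
    { apply HK. pose proof (Rle_abs (r t)). lra. }
    rewrite <- Hfix at 1. rewrite E1, E3. auto. Qed.

Lemma claim2 (Gamma : (R -> R) -> Prop) (HG : is_subgroup Gamma)
  (Hcs : forall f, Gamma f -> compactly_supported f)
  (HF : forall f, F_comm f -> Gamma f)
  (N : (R -> R) -> Prop) (HNs : is_subgroup N) (Hnorm : normal_prop N (comm_subgroup Gamma))
  x0 dl (Hdl : 0 < dl) n ni (Nn : N n) (Nni : N ni)
  (En1 : forall x, ni (n x) = x) (En2 : forall x, n (ni x) = x)
  (Hdisj : forall t, (x0 - dl < t < x0 + dl) -> ~ (x0 - dl < n t < x0 + dl))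
  u ui v vi (Gu : comm_subgroup Gamma u) (Gv : comm_subgroup Gamma v)
  (Eu1 : forall x, ui (u x) = x) (Eu2 : forall x, u (ui x) = x)
  (Ev1 : forall x, vi (v x) = x) (Ev2 : forall x, v (vi x) = x) :
  N (fun x => ui (vi (u (v x)))).
Proof.
  pose proof (G'_sub Gamma HG) as HG'.
  set (U := fun t => x0 - dl < t < x0 + dl).
  destruct (Hcs u (G'_G Gamma HG u Gu)) as [Ku HKu].
  destruct (Hcs v (G'_G Gamma HG v Gv)) as [Kv HKv].
  set (Kb := Rabs Ku + Rabs Kv + 1).
  pose proof (Rabs_pos Ku). pose proof (Rabs_pos Kv).
  set (S := fun t => -Kb <= t <= Kb).
  assert (Su : fixout S u) by (apply (fixout_cs u Ku); auto; unfold Kb; lra).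
  assert (Sv : fixout S v) by (apply (fixout_cs v Kv); auto; unfold Kb; lra).
  assert (Sui : fixout S ui) by (apply (fixout_inv S u); auto).
  assert (Svi : fixout S vi) by (apply (fixout_inv S v); auto).
  destruct (Shrink Gamma HG HF Kb x0 dl Hdl) as [p [Hp Hpb]].
  destruct (Lhat Gamma HG Hcs HF p Kb Hp) as [ph [Gph Eph]].
  destruct (sub_homeo_inv _ ph HG' Gph) as [phi [Gphi [E1 E2]]].
  assert (HU : forall t, S t -> U (ph t)) by (intros t Ht; unfold U; rewrite Eph; auto).
  assert (Gui : comm_subgroup Gamma ui) by (apply (sub_inv _ u HG' Gu); auto).
  assert (Gvi : comm_subgroup Gamma vi) by (apply (sub_inv _ v HG' Gv); auto).
  assert (Gc : forall w, comm_subgroup Gamma w -> comm_subgroup Gamma (fun x => ph (w (phi x)))).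
  { intros w Gw. apply sub_comp; auto. apply (sub_comp _ w phi); auto. }
  pose proof (claim1 (comm_subgroup Gamma) N HNs Hnorm U n ni Nn Nni En1 En2 Hdisj
    (fun x => ph (ui (phi x))) (fun x => ph (u (phi x)))
    (fun x => ph (v (phi x))) (fun x => ph (vi (phi x)))
    (Gc ui Gui) (Gc v Gv)
    ltac:(intros; cbv beta; rewrite E1, Eu2, E2; auto) ltac:(intros; cbv beta; rewrite E1, Eu1, E2; auto)
    ltac:(intros; cbv beta; rewrite E1, Ev1, E2; auto) ltac:(intros; cbv beta; rewrite E1, Ev2, E2; auto)
    (conj_fixout S U ph phi ui E2 HU Sui) (conj_fixout S U ph phi v E2 HU Sv)) as Hc.
  cbv beta in Hc.
  assert (Hc2 : N (fun x => ph (ui (vi (u (v (phi x))))))).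
  { replace (fun x => ph (ui (vi (u (v (phi x)))))) with
      (fun x => ph (ui (phi (ph (vi (phi (ph (u (phi (ph (v (phi x)))))))))))); auto.
    apply functional_extensionality; intros; rewrite !E1; auto. }
  pose proof (Hnorm ph phi _ Gph E1 E2 Hc2) as Hc3. cbv beta in Hc3.
  replace (fun x => ui (vi (u (v x)))) with (fun x => phi (ph (ui (vi (u (v (phi (ph x)))))))); auto.
  apply functional_extensionality; intros; rewrite !E1; auto.
Qed.

Lemma claim3 (Gamma : (R -> R) -> Prop) (HG : is_subgroup Gamma)
  (Hcs : forall f, Gamma f -> compactly_supported f)
  (HF : forall f, F_comm f -> Gamma f)
  (N : (R -> R) -> Prop)
  (Hc2 : forall u ui v vi, comm_subgroup Gamma u -> comm_subgroup Gamma v ->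
     (forall x, ui (u x) = x) -> (forall x, u (ui x) = x) ->
     (forall x, vi (v x) = x) -> (forall x, v (vi x) = x) ->
     N (fun x => ui (vi (u (v x))))) :
  forall f, commutators Gamma f -> N f.
Proof. intros f [g [gi [h [hi [Hg [Hh [Eg1 [Eg2 [Eh1 [Eh2 ->]]]]]]]]]].
  destruct (Hcs g Hg) as [Kg HKg]. destruct (Hcs h Hh) as [Kh HKh].
  set (Kb := Rabs Kg + Rabs Kh + 1).
  pose proof (Rabs_pos Kg). pose proof (Rabs_pos Kh).
  set (S := fun t => -Kb <= t <= Kb).
  set (A := fun t => Kb + 1 < t < Kb + 3).
  set (B := fun t => Kb + 5 < t < Kb + 7).
  assert (Sg : fixout S g) by (apply (fixout_cs g Kg); auto; unfold Kb; lra).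
  assert (Sh : fixout S h) by (apply (fixout_cs h Kh); auto; unfold Kb; lra).
  assert (Sgi : fixout S gi) by (apply (fixout_inv S g); auto).
  assert (Shi : fixout S hi) by (apply (fixout_inv S h); auto).
  assert (Ggi : Gamma gi) by (apply (sub_inv _ g HG Hg); auto).
  assert (Ghi : Gamma hi) by (apply (sub_inv _ h HG Hh); auto).
  destruct (Shrink Gamma HG HF Kb (Kb + 2) 1 ltac:(lra)) as [p [Hp Hpb]].
  destruct (Shrink Gamma HG HF Kb (Kb + 6) 1 ltac:(lra)) as [q [Hq Hqb]].
  destruct (sub_homeo_inv Gamma p HG Hp) as [pi [Hpi [Ep1 Ep2]]].
  destruct (sub_homeo_inv Gamma q HG Hq) as [qi [Hqi [Eq1 Eq2]]].
  assert (HA : forall t, S t -> A (p t)) by (intros t Ht; unfold A; specialize (Hpb t Ht); lra).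
  assert (HB : forall t, S t -> B (q t)) by (intros t Ht; unfold B; specialize (Hqb t Ht); lra).
  assert (Gu : comm_subgroup Gamma (fun x => g (p (gi (pi x))))).
  { apply gen_in. exists gi, g, pi, p. repeat split; auto. }
  assert (Gv : comm_subgroup Gamma (fun x => h (q (hi (qi x))))).
  { apply gen_in. exists hi, h, qi, q. repeat split; auto. }
  pose proof (Hc2 (fun x => g (p (gi (pi x)))) (fun x => p (g (pi (gi x))))
    (fun x => h (q (hi (qi x)))) (fun x => q (h (qi (hi x)))) Gu Gv
    ltac:(intros; cbv beta; rewrite Eg1, Ep1, Eg2, Ep2; auto)
    ltac:(intros; cbv beta; rewrite Ep1, Eg1, Ep2, Eg2; auto)
    ltac:(intros; cbv beta; rewrite Eh1, Eq1, Eh2, Eq2; auto)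
    ltac:(intros; cbv beta; rewrite Eq1, Eh1, Eq2, Eh2; auto)) as HN.
  cbv beta in HN.
  replace (fun x => gi (hi (g (h x)))) with
    (fun x => p (g (pi (gi (q (h (qi (hi (g (p (gi (pi (h (q (hi (qi x)))))))))))))))); auto.
  apply functional_extensionality; intro t.
  apply (claim3_point S A B g gi h hi (fun x => p (gi (pi x))) (fun x => p (g (pi x)))
                      (fun x => q (hi (qi x))) (fun x => q (h (qi x)))).
  - unfold S, A; intros; lra.
  - unfold S, B; intros; lra.
  - unfold A, B; intros; lra.
  - auto. - auto. - auto. - auto.
  - intros; cbv beta; rewrite Ep1, Eg2, Ep2; auto.
  - intros; cbv beta; rewrite Ep1, Eg1, Ep2; auto.
  - intros; cbv beta; rewrite Eq1, Eh2, Eq2; auto.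
  - intros; cbv beta; rewrite Eq1, Eh1, Eq2; auto.
  - auto. - auto.
  - apply (conj_fixout S A p pi gi Ep2 HA Sgi).
  - apply (conj_fixout S B q qi hi Eq2 HB Shi).
Qed.

Theorem mainTheorem8 (Gamma : (R -> R) -> Prop)
  (HG : is_subgroup Gamma)
  (Hcs : forall f, Gamma f -> compactly_supported f)
  (HF : forall f, F_comm f -> Gamma f) :
  simple_group (comm_subgroup Gamma).
Proof.
  pose proof (G'_sub Gamma HG) as HG'.
  split.
  - destruct (Shrink Gamma HG HF 1 10 1 ltac:(lra)) as [p [Hp Hpb]].
    destruct (Lhat Gamma HG Hcs HF p 1 Hp) as [ph [Gph Eph]].
    exists ph. split; auto. intro E.
    assert (ph 0 = 0) by (rewrite E; auto).
    rewrite Eph in H by lra. specialize (Hpb 0 ltac:(lra)). lra.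
  - intros N [HNs [HNG Hnorm]].
    destruct (classic (forall f, N f -> f = (fun x => x))) as [H|H]; [left; auto|right].
    apply not_all_ex_not in H. destruct H as [n Hn]. apply imply_to_and in Hn. destruct Hn as [Nn Hnid].
    assert (Hx0 : exists x0, n x0 <> x0).
    { apply NNPP; intro Hc. apply Hnid. apply functional_extensionality; intro x.
      apply NNPP; intro Hx. apply Hc. exists x; auto. }
    destruct Hx0 as [x0 Hx0].
    set (d := Rabs (n x0 - x0)).
    assert (Hd : 0 < d) by (apply Rabs_pos_lt; intro; apply Hx0; lra).
    assert (Gn : Gamma n) by (apply (G'_G Gamma HG), HNG; auto).
    destruct (HG) as [Hhomeo _]. destruct (Hhomeo n Gn) as [Hcont _].
    destruct (cont_ball n x0 (d/2) Hcont ltac:(lra)) as [d0 [Hd0 Hball]].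
    set (dl := Rmin d0 (d/2)).
    assert (Hdl : 0 < dl) by (apply Rmin_pos; lra).
    assert (Hdl1 : dl <= d0) by apply Rmin_l.
    assert (Hdl2 : dl <= d/2) by apply Rmin_r.
    assert (Hdisj : forall t, (x0 - dl < t < x0 + dl) -> ~ (x0 - dl < n t < x0 + dl)).
    { intros t Ht Hnt. assert (Rabs (t - x0) < d0) by (apply abs_lt; lra).
      pose proof (Hball t H) as H1. apply abs_lt_inv in H1.
      assert (Rabs (n x0 - x0) < d) by (apply abs_lt; lra). unfold d in H0. lra. }
    destruct (sub_homeo_inv N n HNs Nn) as [ni [Nni [En1 En2]]].
    assert (Hc2 := claim2 Gamma HG Hcs HF N HNs Hnorm x0 dl Hdl n ni Nn Nni En1 En2 Hdisj).
    assert (Hc3 := claim3 Gamma HG Hcs HF N Hc2).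
    intros f Hf. apply Hf; auto.
Qed.
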